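(* For every integer $k>2$, $\mathcal{U}_k^m(\mathfrak{N})=\mathbb{N}_{\ge 2}$.
   Context: $\mathbb{N}$ denotes the non-negative integers and $\mathbb{N}_{\ge2}$ the set of integers greater than one. A numerical semigroup is a submonoid of $(\mathbb{N},+)$ with finite complement; $\mathfrak{N}$ denotes the set of all numerical semigroups (a monoid under intersection). A numerical semigroup is irreducible if it cannot be written as the intersection of two numerical semigroups properly containing it. Given a numerical semigroup $S$ and irreducible numerical semigroups $S_1,\dots,S_n$, the expression $S_1\cap\dots\cap S_n$ is a factorization of $S$ (of length $n$) if $S=S_1\cap\dots\cap S_n$ and $S\neq\bigcap_{j\in J}S_j$ for every nonempty proper subset $J\subsetneq\{1,\dots,n\}$. For a positive integer $k$, $\mathcal{U}_k^m(\mathfrak{N})$ is the set of positive integers $l$ such that there exists a numerical semigroup having a factorization of length $k$ and a factorization of length $l$. *)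

(* Defs.v *)
From Stdlib Require Import Arith.

Definition set_eq (A B : nat -> Prop) : Prop := forall x, A x <-> B x.
Definition subset (A B : nat -> Prop) : Prop := forall x, A x -> B x.

Definition numerical_semigroup (S : nat -> Prop) : Prop :=
  S 0 /\
  (forall a b, S a -> S b -> S (a + b)) /\
  (exists N, forall n, N <= n -> S n).

Definition irreducible (S : nat -> Prop) : Prop :=
  numerical_semigroup S /\
  ~ (exists T1 T2 : nat -> Prop,
        numerical_semigroup T1 /\ numerical_semigroup T2 /\
        subset S T1 /\ ~ subset T1 S /\
        subset S T2 /\ ~ subset T2 S /\
        set_eq S (fun x => T1 x /\ T2 x)).

Definition sub_inter (n : nat) (F : nat -> nat -> Prop) (J : nat -> bool)
  : nat -> Prop :=
  fun x => forall i, i < n -> J i = true -> F i x.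

Definition is_factorization (S : nat -> Prop) (n : nat)
  (F : nat -> nat -> Prop) : Prop :=
  (forall i, i < n -> irreducible (F i)) /\
  set_eq S (sub_inter n F (fun _ => true)) /\
  (forall J : nat -> bool,
      (exists i, i < n /\ J i = true) ->
      (exists i, i < n /\ J i = false) ->
      ~ set_eq S (sub_inter n F J)).

Definition has_factorization_of_length (S : nat -> Prop) (n : nat) : Prop :=
  exists F, is_factorization S n F.

Definition U_m (k : nat) (l : nat) : Prop :=
  0 < l /\
  exists S, numerical_semigroup S /\
    has_factorization_of_length S k /\ has_factorization_of_length S l.

(* Main.v *)
Require Import Defs.
From Stdlib Require Import Arith Lia Classical.

Definition Xs (c x : nat) : Prop := x = 0 \/ (c <= x /\ x <> 2*c-1).
Definition As (n x : nat) : Prop := (exists k, x = 2*k) \/ 2*n+1 <= x.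
Definition Sg (p x : nat) : Prop :=
  x = 0 \/ (2*p+1 <= x /\ ((exists k, x = 2*k) \/ 2*(2*p+1) <= x)).
Definition Fam (p L i : nat) : nat -> Prop :=
  if i =? 0 then Xs (2*p+1) else if i =? 1 then As (2*p+2-L)
  else Xs (2*p+1-L+i).

Lemma Fam_0 p L : Fam p L 0 = Xs (2*p+1). Proof. reflexivity. Qed.
Lemma Fam_1 p L : Fam p L 1 = As (2*p+2-L). Proof. reflexivity. Qed.
Lemma Fam_ge2 p L i : 2 <= i -> Fam p L i = Xs (2*p+1-L+i).
Proof. intros H. destruct i as [|[|i]]; [lia|lia|reflexivity]. Qed.

Lemma Xs_ns c : 1 <= c -> numerical_semigroup (Xs c).
Proof.
  intros Hc. unfold numerical_semigroup, Xs. split; [left; reflexivity|]. split.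
  - intros a b [->|[Ha Ha']] [->|[Hb Hb']]; try (right; lia); left; lia.
  - exists (2*c). intros n Hn. right; lia.
Qed.

Lemma As_ns n : numerical_semigroup (As n).
Proof.
  unfold numerical_semigroup, As. split; [left; exists 0; reflexivity|]. split.
  - intros a b [[k Hk]|Ha] [[m Hm]|Hb]; try (right; lia). left; exists (k+m); lia.
  - exists (2*n+1). intros m Hm. right; lia.
Qed.

Lemma Sg_ns p : numerical_semigroup (Sg p).
Proof.
  unfold numerical_semigroup, Sg. split; [left; reflexivity|]. split.
  - intros a b [->|[Ha Ha']] [->|[Hb Hb']].
    + left; lia.
    + right. split; auto.
    + right. rewrite Nat.add_0_r. split; auto.
    + right. split; [lia|]. right; lia.
  - exists (2*(2*p+1)). intros n Hn. right; split; [lia|]. right; lia.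
Qed.

Lemma irr_crit (T : nat -> Prop) (F : nat) :
  numerical_semigroup T -> ~ T F ->
  (forall y, ~ T y -> y = F \/ (y < F /\ T (F - y)) \/ y + y = F) ->
  irreducible T.
Proof.
  intros HT HF Hcrit. split; [exact HT|].
  intros [T1 [T2 [HT1 [HT2 [S1 [N1 [S2 [N2 Heq]]]]]]]].
  assert (key : forall U, numerical_semigroup U -> subset T U -> ~ subset U T -> U F).
  { intros U HU SU NU. apply NNPP. intros HUF. apply NU. intros y Uy. apply NNPP. intros Ty.
    destruct HU as [_ [Hadd _]].
    destruct (Hcrit y Ty) as [E|[[Hlt HTy]|Hyy]].
    - subst. apply HUF; exact Uy.
    - apply HUF. replace F with (y + (F - y)) by lia. apply Hadd; auto.
    - apply HUF. rewrite <- Hyy. apply Hadd; auto. }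
  apply HF. apply Heq. split.
  - exact (key T1 HT1 S1 N1).
  - exact (key T2 HT2 S2 N2).
Qed.

Lemma Xs_irr c : 1 <= c -> irreducible (Xs c).
Proof.
  intros Hc. apply (irr_crit _ (2*c-1)); [apply Xs_ns; auto| |].
  - unfold Xs. intros [H|[_ H]]; lia.
  - intros y Hy. unfold Xs in Hy.
    destruct (Nat.eq_dec y (2*c-1)) as [E|E]; [left; exact E|].
    right; left. destruct (le_lt_dec c y) as [Hl|Hl].
    + exfalso. apply Hy. right. split; auto.
    + assert (y <> 0) by (intro; apply Hy; left; auto).
      split; [lia|]. unfold Xs. right. lia.
Qed.

Lemma As_irr n : 1 <= n -> irreducible (As n).
Proof.
  intros Hn. apply (irr_crit _ (2*n-1)); [apply As_ns| |].
  - unfold As. intros [[k Hk]|H]; lia.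
  - intros y Hy. unfold As in Hy.
    destruct (Nat.eq_dec y (2*n-1)) as [E|E]; [left; exact E|].
    right; left.
    destruct (Nat.Even_or_Odd y) as [[k Hk]|[k Hk]].
    + exfalso. apply Hy. left. exists k; auto.
    + destruct (le_lt_dec (2*n+1) y) as [Hl|Hl].
      * exfalso. apply Hy. right; auto.
      * split; [lia|]. unfold As. left. exists (n-1-k). lia.
Qed.

Lemma fact_ok p L : 1 <= p -> 2 <= L -> L <= p+1 ->
  is_factorization (Sg p) L (Fam p L).
Proof.
  intros Hp HL HLp. split; [|split].
  - intros i Hi. destruct (Nat.eq_dec i 0) as [->|N0].
    + rewrite Fam_0. apply Xs_irr. lia.
    + destruct (Nat.eq_dec i 1) as [->|N1].
      * rewrite Fam_1. apply As_irr. lia.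
      * rewrite Fam_ge2 by lia. apply Xs_irr. lia.
  - intros x. split.
    + intros HS i Hi _. unfold Sg in HS.
      destruct (Nat.eq_dec i 0) as [->|N0].
      * rewrite Fam_0. unfold Xs.
        destruct HS as [->|[H1 [[k Hk]|H2]]]; [left; lia|right; lia|right; lia].
      * destruct (Nat.eq_dec i 1) as [->|N1].
        -- rewrite Fam_1. unfold As.
           destruct HS as [->|[H1 [[k Hk]|H2]]]; [left; exists 0; lia|left; exists k; lia|right; lia].
        -- rewrite Fam_ge2 by lia. unfold Xs.
           destruct HS as [->|[H1 [[k Hk]|H2]]]; [left; lia|right; lia|right; lia].
    + intros H.
      pose proof (H 0 ltac:(lia) eq_refl) as H0.
      pose proof (H 1 ltac:(lia) eq_refl) as H1.
      rewrite Fam_0 in H0. rewrite Fam_1 in H1. unfold Xs in H0. unfold As in H1.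
      unfold Sg.
      destruct H0 as [->|[Hc Hne]]; [left; reflexivity|]. right; split; [exact Hc|].
      destruct H1 as [[k Hk]|Hn]; [left; exists k; exact Hk|].
      destruct (Nat.Even_or_Odd x) as [[k Hk]|[k Hk]]; [left; exists k; exact Hk|].
      destruct (le_lt_dec (2*(2*p+1)) x) as [Hle|Hlt]; [right; exact Hle|].
      exfalso.
      pose proof (H (k + L - 2*p) ltac:(lia) eq_refl) as Hi.
      rewrite Fam_ge2 in Hi by lia. unfold Xs in Hi. lia.
  - intros J _ [i0 [Hi0 HJ]] Heq.
    assert (priv : exists g, ~ Sg p g /\ forall j, j < L -> j <> i0 -> Fam p L j g).
    { destruct (Nat.eq_dec i0 0) as [->|N0].
      - exists (2*p). split.
        + unfold Sg. intros [H|[H _]]; lia.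
        + intros j Hj Hne. destruct (Nat.eq_dec j 1) as [->|N1].
          * rewrite Fam_1. unfold As. left. exists p; reflexivity.
          * rewrite Fam_ge2 by lia. unfold Xs. right. lia.
      - destruct (Nat.eq_dec i0 1) as [->|N1].
        + exists (2*(2*p+2-L)-1). split.
          * unfold Sg. intros [H|[H [[k Hk]|H']]]; lia.
          * intros j Hj Hne. destruct (Nat.eq_dec j 0) as [->|N0'].
            -- rewrite Fam_0. unfold Xs. right. lia.
            -- rewrite Fam_ge2 by lia. unfold Xs. right. lia.
        + exists (2*(2*p+1-L+i0)-1). split.
          * unfold Sg. intros [H|[H [[k Hk]|H']]]; lia.
          * intros j Hj Hne. destruct (Nat.eq_dec j 0) as [->|N0'].
            -- rewrite Fam_0. unfold Xs. right. lia.
            -- destruct (Nat.eq_dec j 1) as [->|N1'].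
               ++ rewrite Fam_1. unfold As. right. lia.
               ++ rewrite Fam_ge2 by lia. unfold Xs. right. lia. }
    destruct priv as [g [Hg Hpriv]].
    apply Hg. apply Heq. intros j Hj HJj. apply Hpriv; auto.
    intro E. subst. rewrite HJ in HJj. discriminate.
Qed.

Lemma inter_bound (n : nat) (F : nat -> nat -> Prop) :
  (forall i, i < n -> exists N, forall x, N <= x -> F i x) ->
  exists N, forall x, N <= x -> forall i, i < n -> F i x.
Proof.
  induction n as [|n IH]; intros H.
  - exists 0. intros. lia.
  - destruct IH as [N1 HN1]. { intros i Hi. apply H. lia. }
    destruct (H n ltac:(lia)) as [N2 HN2].
    exists (N1 + N2). intros x Hx i Hi.
    destruct (Nat.eq_dec i n) as [->|Ne].
    + apply HN2. lia.
    + apply HN1; lia.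
Qed.

Lemma inter_ns n F J : (forall i, i < n -> numerical_semigroup (F i)) ->
  numerical_semigroup (sub_inter n F J).
Proof.
  intros H. split; [|split].
  - intros i Hi _. apply (H i Hi).
  - intros a b Ha Hb i Hi HJ. apply (H i Hi); auto.
  - destruct (inter_bound n F) as [N HN].
    { intros i Hi. apply (H i Hi). }
    exists N. intros x Hx i Hi _. apply HN; auto.
Qed.

Lemma no_len1 S k F G : 2 <= k -> is_factorization S k F ->
  is_factorization S 1 G -> False.
Proof.
  intros Hk [HFirr [HFeq HFred]] [HGirr [HGeq _]].
  assert (HSG : forall x, S x <-> G 0 x).
  { intros x. rewrite (HGeq x). split.
    - intros H. apply H; auto.
    - intros H i Hi _. assert (i = 0) by lia. subst. auto. }
  destruct (HGirr 0 ltac:(lia)) as [_ Hnot]. apply Hnot.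
  exists (F 0), (sub_inter k F (fun i => negb (i =? 0))).
  assert (HF0 : forall x, S x -> forall i, i < k -> F i x).
  { intros x Hx i Hi. apply (HFeq x); auto. }
  split; [apply (HFirr 0); lia|].
  split; [apply inter_ns; intros i Hi; apply (HFirr i Hi)|].
  split; [intros x Hx; apply HF0; [apply HSG; auto|lia]|].
  split.
  { intros Hsub. apply (HFred (fun i => i =? 0)).
    - exists 0. split; [lia|reflexivity].
    - exists 1. split; [lia|reflexivity].
    - intros x. split.
      + intros Hx i Hi HJ. apply HF0; auto.
      + intros H. apply HSG. apply Hsub. apply H; [lia|reflexivity]. }
  split; [intros x Hx i Hi _; apply HF0; [apply HSG; auto|auto]|].
  split.
  { intros Hsub. apply (HFred (fun i => negb (i =? 0))).
    - exists 1. split; [lia|reflexivity].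
    - exists 0. split; [lia|reflexivity].
    - intros x. split.
      + intros Hx i Hi HJ. apply HF0; auto.
      + intros H. apply HSG. apply Hsub. exact H. }
  intros x. split.
  - intros Hx. apply HSG in Hx. split.
    + apply HF0; auto; lia.
    + intros i Hi _. apply HF0; auto.
  - intros [H0 H2]. apply HSG. apply (HFeq x). intros i Hi _.
    destruct i as [|i]; auto; apply H2; auto.
Qed.

Theorem theorem2p5 : forall k : nat, 2 < k -> forall l : nat, U_m k l <-> 2 <= l.
Proof.
  intros k Hk l. split.
  - intros [Hl [S [HS [[F HF] [G HG]]]]].
    destruct (Nat.eq_dec l 1) as [->|Ne]; [|lia].
    exfalso. exact (no_len1 S k F G ltac:(lia) HF HG).
  - intros Hl. split; [lia|]. exists (Sg (k+l)). split; [apply Sg_ns|].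
    split; eexists; apply fact_ok; lia.
Qed.
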